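(* Let $\xi\ge 1$ and let $W_K$ be a kernel walk with excess $\xi$, with induced tree $T(W_K)=(V,E)$. Then $|V|\le 3\xi-1$ and the number of simple edges of $T(W_K)$ is at most $2\xi-2$, and these bounds are tight. Consequently $K_\xi(u,v,z)$ is a polynomial of degree $2\xi-2$ in $u$, $3\xi-1$ in $v$ and $4\xi-2$ in $z$.
   Context: A tree walk of size $m$ and length $L$ is a sequence $W=(v_1,\dots,v_L)$ of elements of $[m]$ in which every element of $[m]$ occurs, such that the graph $T(W)$ with vertex set $[m]$ and edges $\{v_j,v_{j+1}\}$ ($1\le j<L$) and $\{v_L,v_1\}$ is a tree; $W$ is the closed walk $v_1\to\dots\to v_L\to v_1$ with root $v_1$; a root of degree 1 is also a leaf. Each edge is traversed $2k$ times ($k\ge1$); its excess is $k-1$; it is simple if $k=1$ and an excess edge if $k\ge2$. The excess of $W$ is the sum of the edge excesses, i.e. half its length minus the number of edges. A kernel walk is a tree walk such that: (i) no non-root leaf is incident to a simple edge; (ii) if the root is a leaf, its edge is an excess edge; (iii) no non-root vertex has degree exactly $2$ with both incident edges simple. $k_{\xi,s,2\ell}$ is the number of kernel walks of length $2\ell$, excess $\xi$, whose induced tree has $s$ simple edges, and \[ K_\xi(u,v,z)=\sum_{s,\ell\ge0}k_{\xi,s,2\ell}\,u^s\frac{v^{\ell-\xi+1}}{(\ell-\xi+1)!}z^\ell . \] *)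

(* Defs.v *)
From mathcomp Require Import all_boot all_algebra.
From mathcomp Require Import boolp.
Set Implicit Arguments. Unset Strict Implicit. Unset Printing Implicit Defensive.
Import GRing.Theory Num.Theory.

(* A walk of size m is a sequence W = (v_1,...,v_L) of elements of [m],
   here represented by 'I_m.  The root is v_1 = head of W. *)

Definition steps m (W : seq 'I_m) : seq ('I_m * 'I_m) := zip W (rot 1 W).

Definition adj m (W : seq 'I_m) : rel 'I_m :=
  fun x y => ((x, y) \in steps W) || ((y, x) \in steps W).

Definition mult m (W : seq 'I_m) (x y : 'I_m) : nat :=
  count (fun p => ((p.1 == x) && (p.2 == y)) || ((p.1 == y) && (p.2 == x)))
        (steps W).

Definition is_tree (T : finType) (e : rel T) : Prop :=
  irreflexive e /\ (forall x y, connect e x y) /\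
  ~ (exists s : seq T, [/\ 2 < size s, uniq s & cycle e s]).

Definition tree_walk m (W : seq 'I_m) : Prop :=
  (forall x : 'I_m, x \in W) /\ is_tree (adj W).

Definition deg m (W : seq 'I_m) (x : 'I_m) : nat := #|[pred y | adj W x y]|.

(* edge {x,y} traversed 2k times: simple iff k = 1, excess edge iff k >= 2 *)
Definition simple_edge m (W : seq 'I_m) (x y : 'I_m) : bool :=
  adj W x y && ((mult W x y)./2 == 1).
Definition excess_edge m (W : seq 'I_m) (x y : 'I_m) : bool :=
  adj W x y && (2 <= (mult W x y)./2).

Definition edges m (W : seq 'I_m) : {set 'I_m * 'I_m} :=
  [set p : 'I_m * 'I_m | (p.1 < p.2)%N && adj W p.1 p.2].

Definition excess m (W : seq 'I_m) : nat :=
  \sum_(p in edges W) ((mult W p.1 p.2)./2 - 1).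

Definition nsimple m (W : seq 'I_m) : nat :=
  #|[set p in edges W | simple_edge W p.1 p.2]|.

Definition is_root m (W : seq 'I_m) (x : 'I_m) : bool := ohead W == Some x.

Definition kernel_walk m (W : seq 'I_m) : Prop :=
  [/\ tree_walk W,
      (forall x y, ~~ is_root W x -> deg W x = 1 -> adj W x y ->
                   ~~ simple_edge W x y),
      (forall x y, is_root W x -> deg W x = 1 -> adj W x y -> excess_edge W x y)
    &
      (forall x, ~~ is_root W x -> deg W x = 2 ->
                 ~ (forall y, adj W x y -> simple_edge W x y))].

(* k_{xi,s,2l}: number of kernel walks (of any size m) of length 2l,
   excess xi, with s simple edges.  A walk of length 2l visiting all of
   [m] has m <= 2l, so summing over m <= 2l is exhaustive. *)
Definition kcount (xi s l : nat) : nat :=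
  \sum_(m < (2 * l).+1)
    #|[set W : (2 * l).-tuple 'I_m |
        `[< kernel_walk (tval W) /\ excess (tval W) = xi /\ nsimple (tval W) = s >] ]|.

Local Open Scope ring_scope.

(* coefficient of u^s v^a z^l in K_xi(u,v,z)
   = sum_{s,l} k_{xi,s,2l} u^s v^(l-xi+1)/(l-xi+1)! z^l  (a is an integer
   exponent since l - xi + 1 may a priori be negative) *)
Definition Kcoef (xi : nat) (s : nat) (a : int) (l : nat) : rat :=
  if a == (l%:Z - xi%:Z + 1) then (kcount xi s l)%:R / ((absz a)`!)%:R else 0.

(* F (a formal series in u, v, z given by its coefficients, with
   possibly negative v-exponents) is a polynomial of degree du in u,
   dv in v and dz in z *)
Definition poly_degrees (F : nat -> int -> nat -> rat) (du : nat) (dv : int)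
  (dz : nat) : Prop :=
  [/\ (forall s a l, F s a l != 0 ->
         [/\ (0 <= a)%R, (s <= du)%N, (a <= dv)%R & (l <= dz)%N]),
      (exists a l, F du a l != 0),
      (exists s l, F s dv l != 0)
    & (exists s a, F s a dz != 0)].

(* Main.v *)
Require Import Defs.
From mathcomp Require Import all_boot all_algebra.
From mathcomp Require Import boolp.
From mathcomp Require Import zify.
Set Implicit Arguments. Unset Strict Implicit. Unset Printing Implicit Defensive.

Definition cp (T : eqType) (x : T) (q : seq T) := zip (x :: q) q.

Lemma pathE_cp (T : eqType) (e : rel T) x q :
  path e x q = all (fun p => e p.1 p.2) (cp x q).
Proof. by elim: q x => //= y q IH x; rewrite IH. Qed.

Lemma zip_rcons_l (T : eqType) (s t : seq T) (a : T) :
  size s = size t -> zip (rcons s a) t = zip s t.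
Proof. by elim: s t => [|x s IH] [|y t] //= [/IH ->]. Qed.

Lemma steps_cons m (x : 'I_m) p : steps (x :: p) = cp x (rcons p x).
Proof. by rewrite /steps rot1_cons /cp -rcons_cons zip_rcons_l // size_rcons. Qed.

Lemma cycle_stepsE m (e : rel 'I_m) W :
  cycle e W = all (fun p => e p.1 p.2) (steps W).
Proof. by case: W => [|x p] //; rewrite steps_cons /= pathE_cp. Qed.

Lemma steps_adj m (W : seq 'I_m) a b : (a, b) \in steps W -> adj W a b.
Proof. by rewrite /adj => ->. Qed.

Lemma adj_sym m (W : seq 'I_m) : symmetric (adj W).
Proof. by move=> x y; rewrite /adj orbC. Qed.

Lemma mult_sym m (W : seq 'I_m) x y : mult W x y = mult W y x.
Proof. by rewrite /mult; apply: eq_count => p; rewrite orbC. Qed.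

Lemma excess_sym m (W : seq 'I_m) x y : excess_edge W x y = excess_edge W y x.
Proof. by rewrite /excess_edge adj_sym mult_sym. Qed.

Lemma simple_sym m (W : seq 'I_m) x y : simple_edge W x y = simple_edge W y x.
Proof. by rewrite /simple_edge adj_sym mult_sym. Qed.

Lemma mem_zip' (T : eqType) (s t : seq T) a b : (a, b) \in zip s t -> a \in s /\ b \in t.
Proof.
elim: s t => [|x s IH] [|y t] //=; rewrite in_cons => /orP[/eqP[-> ->]|/IH[H1 H2]].
  by split; apply: mem_head.
by rewrite !in_cons H1 H2 !orbT; split.
Qed.

Lemma steps_mem m (W : seq 'I_m) a b : (a, b) \in steps W -> a \in W /\ b \in W.
Proof. by move/mem_zip' => [H1]; rewrite mem_rot. Qed.

Lemma adj_mem m (W : seq 'I_m) a b : adj W a b -> a \in W /\ b \in W.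
Proof.
by rewrite /adj => /orP[/steps_mem//|/steps_mem[? ?]].
Qed.

Lemma next_exists m (W : seq 'I_m) x : x \in W -> exists y, (x, y) \in steps W.
Proof.
move=> xW; have : x \in unzip1 (steps W) by rewrite /steps unzip1_zip // size_rot.
by case/mapP => [[a b]] Hab /= ->; exists b.
Qed.

Lemma walk_path m (r : 'I_m) p : path (adj (r :: p)) r p.
Proof.
have : cycle (fun a b => (a, b) \in steps (r :: p)) (r :: p).
  by rewrite cycle_stepsE; apply/allP => -[a b].
rewrite /= rcons_path => /andP[H _].
by apply: sub_path H => a b; apply: steps_adj.
Qed.

Lemma walk_connect m (W : seq 'I_m) x y : x \in W -> y \in W -> connect (adj W) x y.
Proof.
case: W => [|r p] // xW yW.
have Hs := sym_connect_sym (@adj_sym _ (r :: p)).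
have := path_connect (walk_path r p).
move=> H; apply: (connect_trans (y := r)); last exact: H.
by rewrite Hs; apply: H.
Qed.

Definition acyc (T : finType) (e : rel T) :=
  ~ (exists s : seq T, [/\ 2 < size s, uniq s & cycle e s]).

Lemma mk_cycle (T : finType) (e : rel T) h q :
  path e h q -> uniq (h :: q) -> e (last h q) h -> 2 <= size q ->
  exists s : seq T, [/\ 2 < size s, uniq s & cycle e s].
Proof. by move=> Hp Hu He Hs; exists (h :: q); split => //=; rewrite rcons_path Hp He. Qed.

Lemma odd_count_zip (T : eqType) (f : pred T) s t : size s = size t ->
  odd (count (fun p => f p.1 != f p.2) (zip s t)) = odd (count f s) (+) odd (count f t).
Proof.
elim: s t => [|a s IH] [|b t] //= [/IH]; rewrite !oddD => ->.
by case: (f a); case: (f b); case: (odd (count f s)); case: (odd (count f t)).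
Qed.

Lemma count_rot1 (T : eqType) (f : pred T) s : count f (rot 1 s) = count f s.
Proof.
have : perm_eq (rot 1 s) s by rewrite perm_rot perm_refl.
by move/permP => ->.
Qed.

Lemma mult_even m (W : seq 'I_m) x y : irreflexive (adj W) -> acyc (adj W) ->
  adj W x y -> ~~ odd (mult W x y).
Proof.
move=> Hirr Hac Hxy.
pose bad := fun u v : 'I_m => ((u == x) && (v == y)) || ((u == y) && (v == x)).
pose e' := fun u v => adj W u v && ~~ bad u v.
have e'sym : symmetric e'.
  move=> u v; rewrite /e' adj_sym /bad.
  by case: (u == x); case: (u == y); case: (v == x); case: (v == y).
pose f := fun u => connect e' u x.
have fx : f x by apply: connect0.
have fy : ~~ f y.
  apply/negP => /connectP [p Hp Hlast].
  move: Hlast; case: (shortenP Hp) => p' Hp' Hu' _ Hl.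
  apply: Hac; apply: (@mk_cycle _ _ y p').
  - by apply: sub_path Hp' => u v /andP[].
  - by [].
  - by rewrite -Hl.
  - case: p' Hp' Hu' Hl => [|z [|z' q]] //=.
      by move=> _ _ Hxy'; move: (Hirr x); rewrite {2}Hxy' Hxy.
    move=> H _ Hz; move: H; rewrite -Hz /e' /bad !eqxx /=.
    by rewrite orbT andbF.
have Hm : mult W x y = count (fun p => f p.1 != f p.2) (steps W).
  rewrite /mult; apply: eq_in_count => -[a b] /= Hab.
  case Hbad: (((a == x) && (b == y)) || ((a == y) && (b == x))).
    move: Hbad => /orP[/andP[/eqP-> /eqP->]|/andP[/eqP-> /eqP->]].
      by rewrite fx (negbTE fy).
    by rewrite fx (negbTE fy).
  have He : e' a b by rewrite /e' /bad Hbad steps_adj.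
  by rewrite /f (same_connect1 (sym_connect_sym e'sym) He) eqxx.
by rewrite Hm /steps odd_count_zip ?size_rot // count_rot1 addbb.
Qed.


Lemma path_avoid (T : eqType) (e : rel T) b x q :
  path (fun u v => e u v && (u != b) && (v != b)) x q -> all (fun v => v != b) q.
Proof. by elim: q x => //= y q IH x /andP[/andP[/andP[_ _] ->] /IH]. Qed.

Lemma prefix_lemma m (W : seq 'I_m) a b c : acyc (adj W) ->
  a \in W -> b \in W -> c \in W -> index a W < index b W -> index c W < index b W ->
  adj W a b -> adj W c b -> a = c.
Proof.
move=> Hac aW bW cW Hab Hcb Haj Hcj.
case: W aW bW cW Hab Hcb Haj Hcj Hac => [//|r p] aW bW cW Hab Hcb Haj Hcj Hac.
set W := r :: p in aW bW cW Hab Hcb Haj Hcj Hac *.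
set k := index b W in Hab Hcb.
have aP : a \in take k W by rewrite in_take.
have cP : c \in take k W by rewrite in_take.
have bP : b \notin take k W by rewrite in_take // ltnn.
have [k' Hk] : exists k', k = k'.+1 by case: (k) Hab => [|k'] //; exists k'.
have HP : take k W = r :: take k' p by rewrite Hk.
pose e' := fun u v => adj W u v && (u != b) && (v != b).
have e'sym : symmetric e'.
  by move=> u v; rewrite /e' adj_sym; case: (u != b); case: (v != b); rewrite ?andbF ?andbT.
have Hpath : path (adj W) r (take k' p).
  by move: (walk_path r p); rewrite -[X in path _ _ X](cat_take_drop k' p) cat_path => /andP[].
have He'path : path e' r (take k' p).
  apply: (sub_in_path (P := [pred u | u != b])) Hpath.
    by move=> u v; rewrite !inE => Hu Hv Huv; rewrite /e' Huv Hu Hv.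
  rewrite -HP; apply/allP => u Hu /=; apply/eqP => Hub; move: bP; rewrite -Hub Hu.
  by [].
have Hcs := sym_connect_sym e'sym.
have cra : connect e' r a by apply: (path_connect He'path); rewrite -HP.
have crc : connect e' r c by apply: (path_connect He'path); rewrite -HP.
have cac : connect e' a c by apply: (connect_trans (y := r)); rewrite // Hcs.
apply/eqP; apply/negPn/negP => Hne.
move: cac => /connectP [q Hq Hl].
move: Hl; case: (shortenP Hq) => q' Hq' Hu' _ Hl.
have Hav := path_avoid Hq'.
have ab : a != b by apply/eqP => Heq; move: bP; rewrite -Heq aP.
apply: Hac; apply: (@mk_cycle _ _ b (a :: q')).
- rewrite /= adj_sym Haj /=; by apply: sub_path Hq' => u v /andP[/andP[]].
- rewrite /= in_cons negb_or eq_sym ab /=.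
  move: Hu' => /= /andP[Ha Hqu]; rewrite Ha Hqu !andbT; apply/negP => Hb.
  by move/allP: Hav => /(_ b Hb); rewrite eqxx.
- by rewrite /= -Hl.
- case: q' Hq' Hu' Hl Hav => [|z q''] //=.
  by move=> _ _ Hl; move: Hne; rewrite Hl eqxx.
Qed.

Definition gmax m (W : seq 'I_m) (p : 'I_m * 'I_m) :=
  if index p.1 W < index p.2 W then p.2 else p.1.
Definition gmin m (W : seq 'I_m) (p : 'I_m * 'I_m) :=
  if index p.1 W < index p.2 W then p.1 else p.2.

Lemma edges_card m (W : seq 'I_m) : tree_walk W -> #|edges W| <= m.-1.
Proof.
move=> [Hall [Hirr [Hconn Hac]]].
case: W Hall Hirr Hconn Hac => [|r p] Hall Hirr Hconn Hac.
  rewrite (_ : edges [::] = set0) ?cards0 //.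
  by apply/setP => q; rewrite !inE /adj /steps /= andbF.
set W := r :: p in Hall Hirr Hconn Hac *.
have Hidx : forall q, q \in edges W ->
    [/\ q.1 \in W, q.2 \in W, index q.1 W != index q.2 W & (q.1 < q.2)%N].
  move=> q; rewrite inE => /andP[Hlt Hq]; have [H1 H2] := adj_mem Hq.
  split => //; apply/eqP => Heq.
  have Hq12 := index_inj r H1 H2 Heq; move: Hlt; rewrite Hq12 ltnn //.
have Hinj : {in edges W &, injective (gmax W)}.
  move=> [x1 y1] [x2 y2] Hq1 Hq2 Heq.
  set q1 := (x1, y1) in Hq1 Heq *. set q2 := (x2, y2) in Hq2 Heq *.
  have [a1 b1 i1 lt1] := Hidx q1 Hq1.
  have [a2 b2 i2 lt2] := Hidx q2 Hq2.
  have adj1 : adj W q1.1 q1.2 by move: Hq1; rewrite inE => /andP[].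
  have adj2 : adj W q2.1 q2.2 by move: Hq2; rewrite inE => /andP[].
  have key : gmin W q1 = gmin W q2.
    apply: (@prefix_lemma _ W _ (gmax W q1)) => //.
    - by rewrite /gmin /gmax; case: ifP => // /negbT; rewrite -leqNgt leq_eqVlt eq_sym (negbTE i1).
    - by rewrite Heq /gmin /gmax; case: ifP => // /negbT; rewrite -leqNgt leq_eqVlt eq_sym (negbTE i2).
    - by rewrite /gmin /gmax; case: ifP => // _; rewrite adj_sym.
    - by rewrite Heq /gmin /gmax; case: ifP => // _; rewrite adj_sym.
  move: Heq key lt1 lt2; rewrite /gmin /gmax /q1 /q2.
  case: ifP => _; case: ifP => _ /= E1 E2; subst => // H1 H2; lia.
have Hsub : gmax W @: edges W \subset [set~ r].
  apply/subsetP => v /imsetP [q Hq ->]; rewrite !inE.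
  have [a1 b1 i1 _] := Hidx q Hq.
  apply/eqP => Hr.
  have : index (gmax W q) W = 0 by rewrite Hr /W /= eqxx.
  rewrite /gmax; case: ifP => [H|/negbT H] Hz; move: H; rewrite Hz //.
  by rewrite -leqNgt leqn0 => /eqP Hz'; move: i1; rewrite Hz Hz'.
rewrite -(card_in_imset Hinj).
apply: leq_trans (subset_leq_card Hsub) _.
by rewrite cardsC1 card_ord.
Qed.


Lemma mult_pos m (W : seq 'I_m) x y : adj W x y -> 0 < mult W x y.
Proof.
rewrite /mult -has_count => /orP[H|H]; apply/hasP.
- by exists (x, y) => //=; rewrite !eqxx.
- by exists (y, x) => //=; rewrite !eqxx orbT.
Qed.

Lemma mult_half m (W : seq 'I_m) x y : tree_walk W -> adj W x y ->
  mult W x y = 2 * (mult W x y)./2 /\ 1 <= (mult W x y)./2.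
Proof.
move=> [_ [Hirr [_ Hac]]] Hxy.
have Hev := mult_even Hirr Hac Hxy.
have Hp := mult_pos Hxy.
have := odd_double_half (mult W x y); rewrite (negbTE Hev) add0n -muln2 => Hd.
split; lia.
Qed.

Lemma simple_or_excess m (W : seq 'I_m) x y : tree_walk W -> adj W x y ->
  simple_edge W x y + excess_edge W x y = 1.
Proof.
move=> Ht Hxy; have [_ H] := mult_half Ht Hxy.
by rewrite /simple_edge /excess_edge Hxy /=; case: (mult W x y)./2 H => [|[|k]].
Qed.

Lemma deg_ge1 m (W : seq 'I_m) x : tree_walk W -> 0 < deg W x.
Proof.
move=> [Hall _]; have [y Hy] := next_exists (Hall x).
by apply/card_gt0P; exists y; rewrite inE; apply: steps_adj.
Qed.

Lemma deg1_uniq m (W : seq 'I_m) x y z : deg W x = 1 -> adj W x y -> adj W x z -> y = z.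
Proof.
rewrite /deg => /eqP/card1P [w Hw] Hy Hz.
by have := Hw y; have := Hw z; rewrite !inE Hy Hz => /esym/eqP -> /esym/eqP ->.
Qed.

Lemma sum_adj_edges m (W : seq 'I_m) (F : 'I_m -> 'I_m -> nat) : irreflexive (adj W) ->
  \sum_(p | adj W p.1 p.2) F p.1 p.2 = \sum_(p in edges W) (F p.1 p.2 + F p.2 p.1).
Proof.
move=> Hirr.
rewrite big_split /= (bigID (fun p : 'I_m * 'I_m => (p.1 < p.2)%N)) /=.
congr (_ + _).
  by apply: eq_bigl => p; rewrite inE andbC.
rewrite (reindex_inj (h := fun p : 'I_m * 'I_m => (p.2, p.1))); last first.
  by move=> [a b] [c d] /= [-> ->].
apply: eq_bigl => -[a b] /=; rewrite inE /= [adj W b a]adj_sym.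
case Hab: (adj W a b); rewrite ?andbF //= andbT.
have Hne : (a : nat) != b.
  by apply/eqP => E; move: (Hirr a); rewrite {2}(val_inj E) Hab.
by rewrite -leqNgt leq_eqVlt (negbTE Hne).
Qed.

Lemma sum_ge_term (I : finType) (P : pred I) (F : I -> nat) i :
  P i -> F i <= \sum_(j | P j) F j.
Proof. by move=> Pi; rewrite (bigD1 i) //= leq_addr. Qed.

Lemma sumC1_const m (r : 'I_m) c : \sum_(v | v != r) c = c * m.-1.
Proof. by rewrite sum_nat_const cardC1 card_ord mulnC. Qed.


Lemma kernel_bound m (W : seq 'I_m) : kernel_walk W ->
  let X := \sum_(p in edges W) (excess_edge W p.1 p.2 : nat) in
  [/\ m <= 3 * X - 1, nsimple W + X = #|edges W| & X <= excess W].
Proof.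
move=> [Ht Hi Hii Hiii] X.
have Hcard := edges_card Ht.
have [Hall [Hirr [Hconn Hac]]] := Ht.
have HE : nsimple W + X = #|edges W|.
  have -> : nsimple W = \sum_(p in edges W) (simple_edge W p.1 p.2 : nat).
    rewrite /nsimple -sum1_card.
    rewrite (eq_bigl (fun p => (p \in edges W) && simple_edge W p.1 p.2)); last first.
      by move=> p; rewrite inE.
    by rewrite big_mkcondr /=; apply: eq_bigr => p _; case: (simple_edge _ _ _).
  rewrite /X -big_split /= -sum1_card; apply: eq_bigr => p; rewrite inE => /andP[_ Hp].
  exact: simple_or_excess Ht Hp.
have HX : X <= excess W.
  rewrite /X /excess; apply: leq_sum => p; rewrite inE => /andP[_ Hp].
  rewrite /excess_edge Hp /=; case: (leqP 2 (mult W p.1 p.2)./2) => H //=; lia.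
have HXd : X = \sum_(p in edges W) (excess_edge W p.1 p.2 : nat) by [].
case: W Hall Hirr Hconn Hac Ht Hi Hii Hiii X Hcard HE HX HXd
  => [|r p] Hall Hirr Hconn Hac Ht Hi Hii Hiii X Hcard HE HX HXd.
  have m0 : m = 0 by case: m {Hconn Hac Hi Hii Hiii HXd X Hcard HE HX Hirr Ht} Hall => // m' /(_ ord0).
  by split => //; rewrite m0.
set W := r :: p in Hall Hirr Hconn Hac Ht Hi Hii Hiii X Hcard HE HX HXd *.
have Hroot : forall v, is_root W v = (v == r).
  by move=> v; rewrite /is_root /= eq_sym; apply/eqP/eqP => [[->]|->].
pose D := deg W.
pose wt := fun v y => if excess_edge W v y then
   (if D v == 1 then 4 else if D y == 1 then 2 else 3) else 0.
pose C := fun v => \sum_(y | adj W v y) wt v y.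
have Hex : forall v y, adj W v y -> ~~ simple_edge W v y -> excess_edge W v y.
  move=> v y Hvy; have := simple_or_excess Ht Hvy.
  by case: simple_edge; case: excess_edge.
have Hwt2 : forall v y, excess_edge W v y -> 2 <= wt v y.
  by move=> v y Hvy; rewrite /wt Hvy; case: ifP => //; case: ifP.
have HC : forall v y, adj W v y -> wt v y <= C v.
  by move=> v y Hvy; apply: (@sum_ge_term _ (fun y => adj W v y) (wt v)).
have Hnb : forall v, exists y, adj W v y.
  move=> v; have := deg_ge1 v Ht; rewrite /deg => /card_gt0P [y].
  by rewrite inE; exists y.
have Hvert : forall v, v != r -> 6 <= C v + 2 * D v.
  move=> v Hvr.
  have Hnr : ~~ is_root W v by rewrite Hroot.
  have Hd := deg_ge1 v Ht.
  case: (ltngtP (D v) 2) => Hd2.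
  - have HD1 : deg W v = 1 by rewrite /D in Hd2; lia.
    have [y Hy] := Hnb v.
    have Hxs := Hex v y Hy (Hi v y Hnr HD1 Hy).
    have := HC v y Hy; rewrite /wt Hxs /D HD1 eqxx; lia.
  - lia.
  - case: (boolP [exists y, adj W v y && ~~ simple_edge W v y]).
      move=> /existsP [y /andP [Hy Hns]].
      have := HC v y Hy; have := Hwt2 v y (Hex v y Hy Hns); lia.
    move=> Hno; exfalso; apply: (Hiii v Hnr Hd2) => y Hy.
    apply/negPn/negP => Hns; move/negP: Hno; apply; apply/existsP; exists y.
    by rewrite Hy Hns.
have Hvr : 4 <= C r + 2 * D r.
  have Hd := deg_ge1 r Ht.
  case: (ltngtP (D r) 2) => Hd2; last lia; last lia.
  have HD1 : deg W r = 1 by rewrite /D in Hd2; lia.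
  have [y Hy] := Hnb r.
  have Hrr : is_root W r by rewrite Hroot.
  have Hxs := Hii r y Hrr HD1 Hy.
  have := HC r y Hy; rewrite /wt Hxs /D HD1 eqxx; lia.
have HsumD : \sum_v D v = 2 * #|edges W|.
  rewrite /D /deg.
  under eq_bigr => v _ do rewrite -sum1_card.
  rewrite (pair_big_dep predT (fun v y => y \in [pred y | adj W v y]) (fun _ _ => 1)) /=.
  rewrite (eq_bigl (fun p => adj W p.1 p.2)); last by move=> q; rewrite inE.
  by rewrite (sum_adj_edges (fun _ _ => 1)) // sum_nat_const mulnC.
have Hlow : 6 * m.-1 + 4 <= \sum_v (C v + 2 * D v).
  rewrite (bigD1 r) //= addnC; apply: leq_add => //.
  rewrite -(sumC1_const r 6); exact: leq_sum.
have Hsplit : \sum_v (C v + 2 * D v) = \sum_v C v + 2 * \sum_v D v.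
  by rewrite big_split /= big_distrr.
have Hm1 : 0 < m by apply: leq_ltn_trans (ltn_ord r).
case: (boolP [exists u, exists v, [&& excess_edge W u v, D u == 1 & D v == 1]]).
  move=> /existsP [u /existsP [v /and3P [Huv Hu Hv]]].
  have Hadj : adj W u v by move: Huv => /andP[].
  have Hcl : forall x y, adj W x y -> x \in [:: u; v] -> y \in [:: u; v].
    move=> x y Hxy; rewrite !inE => /orP[/eqP Ex|/eqP Ex]; subst x.
      by rewrite (deg1_uniq (eqP Hu) Hxy Hadj) eqxx orbT.
    by rewrite (deg1_uniq (eqP Hv) Hxy (_ : adj W v u)) ?eqxx // adj_sym.
  have Hcl' : closed (adj W) [:: u; v].
    move=> x y Hxy; apply/idP/idP; first exact: Hcl.
    by apply: Hcl; rewrite adj_sym.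
  have Hallin : forall w, w \in [:: u; v].
    by move=> w; rewrite -(closed_connect Hcl' (Hconn u w)) mem_head.
  have Hm2 : m <= 2.
    rewrite -[m]card_ord; apply: leq_trans (card_size [:: u; v]).
    by apply: subset_leq_card; apply/subsetP => w _; apply: Hallin.
  have HX1 : 1 <= X.
    have Huv' : u != v by apply/eqP => E; move: (Hirr u); rewrite {2}E Hadj.
    pose q := if (u < v)%N then (u, v) else (v, u).
    have Hq : q \in edges W.
      rewrite /q inE; case: ifP => //= Hlt; first by rewrite Hlt.
      rewrite adj_sym Hadj andbT ltn_neqAle leqNgt Hlt andbT.
      by rewrite eq_sym; move: Huv'; apply: contra => /eqP /val_inj ->.
    have Hxq : excess_edge W q.1 q.2 by rewrite /q; case: ifP => _ //=; rewrite excess_sym.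
    rewrite HXd; apply: leq_trans (@sum_ge_term _ (fun p => p \in edges W) _ q Hq).
    by rewrite Hxq.
  split => //; lia.
move=> HnoBL.
have HsumC : \sum_v C v <= 6 * X.
  rewrite /C (pair_big_dep predT (fun v y => adj W v y) wt) /=.
  rewrite (sum_adj_edges wt) // HXd big_distrr /=; apply: leq_sum => q.
  rewrite inE => /andP[_ Hq].
  rewrite /wt [excess_edge W q.2 q.1]excess_sym.
  case Hexq: (excess_edge W q.1 q.2) => //=.
  case: eqP => H1; case: eqP => H2 //.
  move/negP: HnoBL; case; apply/existsP; exists q.1; apply/existsP; exists q.2.
  by rewrite Hexq H1 H2 eqxx.
split => //; lia.
Qed.


Lemma sum_count_mem (T : finType) (s : seq T) : \sum_(x : T) count_mem x s = size s.
Proof.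
elim: s => [|a s IH] /=; first by rewrite big1.
rewrite big_split /= IH (bigD1 a) //= eqxx big1 ?addn0 // => x Hx.
by rewrite eq_sym (negbTE Hx).
Qed.

Lemma count_or (T : eqType) (a b : pred T) s : (forall z, ~~ (a z && b z)) ->
  count (fun z => a z || b z) s = count a s + count b s.
Proof.
move=> H; elim: s => //= z s ->; have := H z.
by case: (a z); case: (b z) => //= _; lia.
Qed.

Lemma mult_split m (W : seq 'I_m) x y : x != y ->
  mult W x y = count_mem (x, y) (steps W) + count_mem (y, x) (steps W).
Proof.
move=> Hxy; rewrite /mult -count_or; last first.
  move=> -[a b] /=; rewrite !xpair_eqE; apply/negP => /andP[/andP[/eqP E1 _] /andP[/eqP E2 _]].
  by move: Hxy; rewrite -E1 -E2 eqxx.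
by apply: eq_count => -[a b] /=; rewrite !xpair_eqE.
Qed.

Lemma size_walk m (W : seq 'I_m) : tree_walk W -> size W = 2 * (#|edges W| + excess W).
Proof.
move=> Ht; have [Hall [Hirr _]] := Ht.
have -> : size W = size (steps W) by rewrite /steps size_zip size_rot minnn.
rewrite -sum_count_mem (bigID (fun q : 'I_m * 'I_m => adj W q.1 q.2)) /=.
rewrite [X in _ + X]big1 ?addn0; last first.
  move=> [a b] /= Hab; apply/count_memPn; apply: contra Hab; exact: steps_adj.
rewrite (eq_bigr (fun q => count_mem (q.1, q.2) (steps W))); last by move=> [a b].
rewrite (sum_adj_edges (fun a b => count_mem (a, b) (steps W))) //.
rewrite (eq_bigr (fun q => 2 * (mult W q.1 q.2)./2)); last first.
  move=> q; rewrite inE => /andP[Hlt Hq].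
  have Hne : q.1 != q.2 by apply/eqP => E; move: Hlt; rewrite E ltnn.
  by rewrite -mult_split //; case: (mult_half Ht Hq).
rewrite -big_distrr /=; congr (2 * _).
rewrite /excess -sum1_card -big_split /=; apply: eq_bigr => q.
rewrite inE => /andP[_ Hq]; have [_ H] := mult_half Ht Hq; lia.
Qed.


Lemma parent_acyc m (e : rel 'I_m) (par : 'I_m -> 'I_m) : symmetric e ->
  (forall a b, e a b -> (a < b)%N -> a = par b) -> acyc e.
Proof.
move=> Hsym Hpar [s [Hsz Hu Hc]].
case: s Hsz Hu Hc => [//|x0 s0] Hsz Hu Hc.
set s := x0 :: s0 in Hsz Hu Hc.
have Hx0 : x0 \in s by rewrite mem_head.
case: (@arg_maxnP _ x0 (mem s) (fun i : 'I_m => val i) Hx0) => v Hv Hmax.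
have := rot_index Hv.
set t := (drop _ _ ++ take _ _) => Hrot.
have Hu' : uniq (v :: t) by rewrite -Hrot rot_uniq.
have Hc' : cycle e (v :: t) by rewrite -Hrot rot_cycle.
have Hsz' : 2 <= size t.
  have E : size (v :: t) = size s by rewrite -Hrot size_rot.
  by move: Hsz; rewrite -E /= ltnS.
have Hmem : forall z, z \in t -> z \in s.
  by move=> z Hz; rewrite -(mem_rot (index v s)) Hrot in_cons Hz orbT.
case: t Hrot Hu' Hc' Hsz' Hmem => [|a [|b t']] // Hrot Hu' Hc' _ Hmem.
have Hc_in : last b t' \in b :: t' by apply: mem_last.
have : path e v (rcons [:: a, b & t'] v) by [].
rewrite rcons_path => /andP[/andP[Hva _] Hcv].
move: Hcv; rewrite /= => Hcv.
have Ha : a \in s by apply: Hmem; rewrite mem_head.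
have Hcs : last b t' \in s by apply: Hmem; rewrite in_cons Hc_in orbT.
move: Hu'; rewrite /= !in_cons !negb_or => /andP[/andP[Hav /andP[Hvb Hv']] /andP[Hab _]].
have Hvbt : v \notin b :: t' by rewrite in_cons negb_or Hvb Hv'.
have Hav' : a != v by rewrite eq_sym.
have Hcv' : last b t' != v.
  by apply/eqP => E; move/negP: Hvbt; apply; rewrite -E.
have Hab' : a \notin b :: t' by rewrite in_cons negb_or.
have Hac : a != last b t' by apply/eqP => E; move/negP: Hab'; apply; rewrite E.
have Hlt : forall z, z \in s -> z != v -> (z < v)%N.
  move=> z Hz Hzv; have := Hmax z Hz; rewrite /= leq_eqVlt => /orP[/eqP E|] //.
  by move: Hzv; rewrite (val_inj E) eqxx.
have Hav2 : e a v by rewrite Hsym.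
have E1 := Hpar a v Hav2 (Hlt a Ha Hav').
have E2 := Hpar _ v Hcv (Hlt _ Hcs Hcv').
by move: Hac; rewrite E1 E2 eqxx.
Qed.

Definition Rpar m (par : 'I_m -> 'I_m) (a b : 'I_m) :=
  (a != b) && (if (a < b)%N then a == par b else b == par a).

Lemma Rpar_sym m (par : 'I_m -> 'I_m) : symmetric (Rpar par).
Proof.
move=> a b; rewrite /Rpar eq_sym; congr (_ && _).
case: (ltngtP a b) => // E; rewrite (val_inj E) //.
Qed.

Lemma build m (r : 'I_m) (p : seq 'I_m) (par : 'I_m -> 'I_m) :
  (forall v, v != r -> adj (r :: p) (par v) v /\ (par v < v)%N) ->
  cycle (Rpar par) (r :: p) ->
  tree_walk (r :: p) /\ #|edges (r :: p)| = m.-1.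
Proof.
move=> Hp Hc; set W := r :: p in Hp Hc *.
have HR : forall a b, adj W a b -> Rpar par a b.
  move: Hc; rewrite cycle_stepsE => /allP Hc a b; rewrite /adj => /orP[H|H].
    exact: (Hc _ H).
  by rewrite Rpar_sym; apply: (Hc _ H).
have Hall : forall x, x \in W.
  move=> x; case: (eqVneq x r) => [->|Hx]; first by rewrite mem_head.
  by have [H _] := Hp x Hx; have [] := adj_mem H.
have Hirr : irreflexive (adj W).
  by move=> x; apply/negP => /HR; rewrite /Rpar eqxx.
have Hpar : forall a b, adj W a b -> (a < b)%N -> a = par b.
  by move=> a b /HR; rewrite /Rpar => /andP[_]; move=> + Hlt; rewrite Hlt => /eqP.
have Ht : tree_walk W.
  split => //; split => //; split.
    by move=> x y; apply: walk_connect.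
  by apply: (@parent_acyc _ _ par) => //; apply: adj_sym.
split => //; apply/eqP; rewrite eqn_leq edges_card //=.
have Hinj : {in predC1 r &, injective (fun v => (par v, v))}.
  by move=> u v _ _ [].
have -> : m.-1 = #|predC1 r| by rewrite cardC1 card_ord.
rewrite -(card_in_imset Hinj).
apply: subset_leq_card; apply/subsetP => q /imsetP [v Hv ->].
have [H1 H2] := Hp v Hv.
by rewrite inE /= H1 H2.
Qed.


Lemma cp_cat (T : eqType) (x : T) s1 s2 : cp x (s1 ++ s2) = cp x s1 ++ cp (last x s1) s2.
Proof. by elim: s1 x => //= y s1 IH x; rewrite /cp /= -IH. Qed.

Section Constr.
Variable n : nat.
Definition dd j := n + 1 + 2 * j.
Definition ll j := n + 2 + 2 * j.
Definition MM := 3 * n + 4.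
Definition pr (v : nat) :=
  if v <= n then v.-1 else if odd (v - n) then minn (v - n).-1./2 n else v.-1.
Definition blk i := [:: dd i; ll i; dd i; ll i; dd i; i; i.+1].
Arguments blk : simpl never.
Fixpoint fwd k j := if j is j'.+1 then blk k ++ fwd k.+1 j' else [::].
Definition mid := [:: dd n; ll n; dd n; ll n; dd n; n;
                      dd n.+1; ll n.+1; dd n.+1; ll n.+1; dd n.+1; n].
Arguments mid : simpl never.
Fixpoint down k := if k is k'.+1 then k' :: down k' else [::].
Definition LL := fwd 0 n ++ mid ++ down n.
Definition Rn a b := (a != b) && (if a < b then a == pr b else b == pr a).

Lemma pr_sp i : 0 < i <= n -> pr i = i.-1.
Proof. by move=> /andP[_ H]; rewrite /pr H. Qed.

Lemma pr_d j : pr (dd j) = minn j n.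
Proof.
rewrite /pr /dd; have -> : (n + 1 + 2 * j <= n) = false by lia.
have -> : odd (n + 1 + 2 * j - n) = true by lia.
congr minn; lia.
Qed.

Lemma pr_l j : pr (ll j) = dd j.
Proof.
rewrite /pr /ll /dd; have -> : (n + 2 + 2 * j <= n) = false by lia.
have -> : odd (n + 2 + 2 * j - n) = false by lia.
lia.
Qed.

Lemma pr_lt v : 0 < v -> pr v < v.
Proof. rewrite /pr; case: ifP => _; first lia; case: ifP => _; lia. Qed.

Lemma pr_le v : pr v <= v.
Proof. rewrite /pr; case: ifP => _; first lia; case: ifP => _; lia. Qed.

Lemma RnA a b : a < b -> pr b = a -> Rn a b.
Proof. by move=> H E; rewrite /Rn H E eqxx andbT; lia. Qed.

Lemma RnB a b : a < b -> pr b = a -> Rn b a.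
Proof. by move=> H E; rewrite /Rn (_ : b < a = false) ?E ?eqxx ?andbT; lia. Qed.

Lemma path_blk i : i < n -> path Rn i (blk i) /\ last i (blk i) = i.+1.
Proof.
move=> Hi; split; first last.
  by rewrite /blk.
have Hd : pr (dd i) = i by rewrite pr_d; lia.
have Hl := pr_l i.
have Hs : pr i.+1 = i by rewrite pr_sp //; lia.
rewrite /blk /= (RnA _ Hd) ?(RnA _ Hl) ?(RnB _ Hl) ?(RnB _ Hd) ?(RnA _ Hs) //;
  rewrite /dd /ll; lia.
Qed.

Lemma path_fwd k j : k + j <= n -> path Rn k (fwd k j) /\ last k (fwd k j) = k + j.
Proof.
elim: j k => [|j IH] k Hkj; first by rewrite /= addn0.
change (fwd k j.+1) with (blk k ++ fwd k.+1 j).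
have Hk : k < n by lia.
have Hk' : k.+1 + j <= n by lia.
have [H1 H2] := path_blk Hk.
have [H3 H4] := IH k.+1 Hk'.
by rewrite cat_path last_cat H1 H2 H3 H4 addSnnS.
Qed.

Lemma path_mid : path Rn n mid /\ last n mid = n.
Proof.
split; last by rewrite /mid.
have Hd : pr (dd n) = n by rewrite pr_d minnn.
have Hd1 : pr (dd n.+1) = n by rewrite pr_d; lia.
have Hl := pr_l n. have Hl1 := pr_l n.+1.
rewrite /mid /= (RnA _ Hd) ?(RnA _ Hl) ?(RnB _ Hl) ?(RnB _ Hd)
   ?(RnA _ Hd1) ?(RnA _ Hl1) ?(RnB _ Hl1) ?(RnB _ Hd1) //; rewrite /dd /ll; lia.
Qed.

Lemma path_down k : k <= n -> path Rn k (down k) /\ last k (down k) = 0.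
Proof.
elim: k => [|k IH] Hk //=.
have [H1 H2] := IH (ltnW Hk).
have Hs : pr k.+1 = k by rewrite pr_sp //; lia.
by rewrite (RnB _ Hs) // H1 H2.
Qed.

Lemma path_LL : path Rn 0 LL /\ last 0 LL = 0.
Proof.
have Hn : 0 + n <= n by lia.
have [H1 H2] := path_fwd Hn.
have [H3 H4] := path_mid.
have [H5 H6] := path_down (leqnn n).
by rewrite /LL !cat_path !last_cat H1 H2 add0n H3 H4 H5 H6.
Qed.

Lemma size_LL : size LL = 8 * n + 12.
Proof.
have Hf : forall k j, size (fwd k j) = 7 * j.
  move=> k j; elim: j k => // j IH k.
  by change (fwd k j.+1) with (blk k ++ fwd k.+1 j); rewrite size_cat IH /blk /=; lia.
have Hd : forall k, size (down k) = k by elim=> //= k ->.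
by rewrite /LL !size_cat Hf Hd /=; lia.
Qed.

Lemma all_LL : all (fun x => x <= MM) LL.
Proof.
have Hf : forall k j, k + j <= n -> all (fun x => x <= MM) (fwd k j).
  move=> k j; elim: j k => // j IH k Hkj.
  change (fwd k j.+1) with (blk k ++ fwd k.+1 j); rewrite all_cat IH; last lia.
  by rewrite /blk /= /dd /ll /MM andbT; apply/and5P; split; try apply/andP; try split; lia.
have Hd : forall k, k <= n -> all (fun x => x <= MM) (down k).
  by elim=> //= k IH Hk; rewrite IH; [rewrite /MM; lia | lia].
rewrite /LL !all_cat Hf; last lia.
rewrite Hd // /mid /= /dd /ll /MM.
repeat (apply/andP; split); lia.
Qed.

Lemma count_fwd (P : pred (nat * nat)) k j i : k <= i < k + j ->
  count P (cp i (blk i)) <= count P (cp k (fwd k j)).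
Proof.
elim: j k => [|j IH] k Hi; first lia.
change (fwd k j.+1) with (blk k ++ fwd k.+1 j).
rewrite cp_cat count_cat.
have -> : last k (blk k) = k.+1 by rewrite /blk.
case: (eqVneq i k) => [->|Hik]; first exact: leq_addr.
apply: leq_trans (IH k.+1 _) (leq_addl _ _); lia.
Qed.

Lemma count_blk (P : pred (nat * nat)) i : i < n ->
  count P (cp i (blk i)) <= count P (cp 0 LL).
Proof.
move=> Hi; rewrite /LL cp_cat count_cat; apply: leq_trans (leq_addr _ _).
by apply: count_fwd; lia.
Qed.

Lemma count_mid (P : pred (nat * nat)) :
  count P (cp n mid) <= count P (cp 0 LL).
Proof.
have Hn : 0 + n <= n by lia.
have [_ H2] := path_fwd Hn.
rewrite /LL cp_cat count_cat H2 add0n cp_cat count_cat.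
by apply: leq_trans (leq_addl _ _); apply: leq_addr.
Qed.

End Constr.


Definition wof (L : seq nat) := 0 :: belast (head 0 L) (behead L).

Lemma wof_rcons L : L != [::] -> last 0 L = 0 -> rcons (behead (wof L)) 0 = L.
Proof. by case: L => [|h L1] // _ /= Hl; rewrite -[X in rcons _ X]Hl -lastI. Qed.

Lemma zip_map2 (A B : Type) (f : A -> B) s t :
  zip (map f s) (map f t) = map (fun p => (f p.1, f p.2)) (zip s t).
Proof. by elim: s t => [|x s IH] [|y t] //=; rewrite IH. Qed.

Lemma deg_ge m (W : seq 'I_m) x (s : seq 'I_m) :
  uniq s -> all (adj W x) s -> size s <= deg W x.
Proof.
move=> Hu Ha; rewrite /deg -(card_uniqP Hu); apply: subset_leq_card.
by apply/subsetP => y Hy; rewrite inE; apply: (allP Ha).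
Qed.

Lemma excess_not_simple m (W : seq 'I_m) x y : excess_edge W x y -> ~~ simple_edge W x y.
Proof. by rewrite /excess_edge /simple_edge => /andP[-> H]; apply/negP => /andP[_ /eqP E]; rewrite E in H. Qed.

Section Fam.
Variable n : nat.
Local Notation M := (MM n).
Definition Wf : seq 'I_M.+1 := map inord (wof (LL n)).
Definition parO (v : 'I_M.+1) : 'I_M.+1 := inord (pr n v).

Lemma LL_nil : LL n != [::].
Proof. rewrite -size_eq0 size_LL; lia. Qed.

Lemma LL_rcons : rcons (behead (wof (LL n))) 0 = LL n.
Proof. by have [_ H] := path_LL n; rewrite wof_rcons ?LL_nil. Qed.

Lemma size_Wf : size Wf = 8 * n + 12.
Proof. by rewrite -(size_LL n) -LL_rcons size_map size_rcons. Qed.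

Lemma stepsWf : steps Wf = map (fun p => (inord p.1, inord p.2)) (cp 0 (LL n)).
Proof.
rewrite /steps /Wf -map_rot zip_map2; congr map.
rewrite [in RHS]/cp -[in RHS]LL_rcons -rcons_cons zip_rcons_l.
  by rewrite /wof rot1_cons.
by rewrite size_rcons.
Qed.

Lemma cycleWf (P : rel 'I_M.+1) : cycle P Wf = path (relpre inord P) 0 (LL n).
Proof. by rewrite /Wf cycle_map -[in RHS]LL_rcons. Qed.

Lemma inord_eq a b : a <= M -> b <= M -> (inord a == inord b :> 'I_M.+1) = (a == b).
Proof. by move=> Ha Hb; rewrite -val_eqE /= !inordK. Qed.

Lemma cycle_Rpar : cycle (Rpar parO) Wf.
Proof.
rewrite cycleWf; have [H _] := path_LL n.
apply: (sub_in_path (P := [pred x | x <= M])) H; last by rewrite /= (all_LL n).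
move=> a b; rewrite !inE => Ha Hb.
have Hpa : pr n a <= M by apply: leq_trans (pr_le n a) Ha.
have Hpb : pr n b <= M by apply: leq_trans (pr_le n b) Hb.
rewrite /Rn /Rpar /relpre /parO /= !inordK // inord_eq // !inord_eq //.
Qed.

Lemma mem_blk q i : i < n -> q \in cp i (blk n i) -> q \in cp 0 (LL n).
Proof. by move=> Hi; rewrite -!has_pred1 !has_count => H; apply: leq_trans H (count_blk _ Hi). Qed.

Lemma mem_mid q : q \in cp n (mid n) -> q \in cp 0 (LL n).
Proof. by rewrite -!has_pred1 !has_count => H; apply: leq_trans H (@count_mid n _). Qed.

Lemma classify a : 0 < a <= M ->
  (0 < a <= n) \/ (exists j, j <= n.+1 /\ (a = dd n j \/ a = ll n j)).
Proof.
move=> /andP[H0 HM]; case: (leqP a n) => Ha; first by left; apply/andP.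
right; exists ((a - n.+1)./2); split; first by rewrite /MM in HM; lia.
case Ho: (odd (a - n.+1)); [right|left]; rewrite /dd /ll; lia.
Qed.

Lemma pairs_in a : 0 < a <= M -> (pr n a, a) \in cp 0 (LL n).
Proof.
move=> Ha; case: (classify Ha) => [Hs|[j [Hj [E|E]]]].
- have [i Ei] : exists i, a = i.+1 by case: (a) Hs => // i _; exists i.
  subst a; have Hi : i < n by lia.
  rewrite pr_sp //=; apply: (mem_blk Hi).
  by rewrite /cp /blk /= !inE eqxx !orbT.
- subst a; rewrite pr_d; case: (ltngtP j n) => Hjn.
  + by apply: (mem_blk Hjn); rewrite /cp /blk /= !inE eqxx.
  + have -> : j = n.+1 by lia.
    by apply: mem_mid; rewrite /cp /mid /= !inE eqxx !orbT.
  + subst j.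
    by apply: mem_mid; rewrite /cp /mid /= !inE eqxx.
- subst a; rewrite pr_l; case: (ltngtP j n) => Hjn.
  + by apply: (mem_blk Hjn); rewrite /cp /blk /= !inE eqxx !orbT.
  + have -> : j = n.+1 by lia.
    by apply: mem_mid; rewrite /cp /mid /= !inE eqxx !orbT.
  + subst j.
    by apply: mem_mid; rewrite /cp /mid /= !inE eqxx !orbT.
Qed.

Lemma NB_par a : 0 < a <= M -> adj Wf (inord (pr n a)) (inord a).
Proof.
move=> Ha; apply: steps_adj; rewrite stepsWf.
exact: (map_f (fun p => (inord p.1, inord p.2) : 'I_M.+1 * 'I_M.+1) (pairs_in Ha)).
Qed.

Lemma Hp_Wf (v : 'I_M.+1) : v != inord 0 -> adj Wf (parO v) v /\ (parO v < v)%N.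
Proof.
move=> Hv.
have Hv0 : 0 < v by move: Hv; rewrite -val_eqE /= inordK //; case: (nat_of_ord v).
have HvM : v <= M by rewrite -ltnS.
have Hpv : pr n v <= M by apply: leq_trans (pr_le n v) HvM.
split.
  by rewrite /parO -{2}(inord_val v); apply: NB_par; rewrite Hv0.
by rewrite /parO inordK ?ltnS // pr_lt.
Qed.

Lemma Wf_tree : tree_walk Wf /\ #|edges Wf| = M.
Proof.
have := @build M.+1 (inord 0) (map inord (belast (head 0 (LL n)) (behead (LL n)))) parO Hp_Wf cycle_Rpar.
by [].
Qed.

Lemma mult_nat a b : a <= M -> b <= M ->
  mult Wf (inord a) (inord b) =
  count (fun q => ((q.1 == a) && (q.2 == b)) || ((q.1 == b) && (q.2 == a))) (cp 0 (LL n)).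
Proof.
move=> Ha Hb; rewrite /mult stepsWf count_map; apply: eq_in_count => -[c d] Hq /=.
have Hall : all (fun x => x <= M) (0 :: LL n) by rewrite /= all_LL.
have [H1 H2] := mem_zip' Hq.
have Hq1 : c <= M by apply: (allP Hall).
have Hq2 : d <= M by apply: (allP Hall); rewrite in_cons H2 orbT.
by rewrite !inord_eq.
Qed.

Lemma count_ge4 (T : eqType) (P : pred T) s1 a b s2 :
  P a -> P b -> 4 <= count P (s1 ++ [:: a; b; a; b] ++ s2).
Proof. by move=> Ha Hb; rewrite !count_cat /= Ha Hb; lia. Qed.

Lemma excess_dl j : j <= n.+1 -> excess_edge Wf (inord (dd n j)) (inord (ll n j)).
Proof.
move=> Hj.
have Hd : dd n j <= M by rewrite /dd /MM; lia.
have Hl : ll n j <= M by rewrite /ll /MM; lia.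
have Hadj : adj Wf (inord (dd n j)) (inord (ll n j)).
  by rewrite -pr_l; apply: NB_par; rewrite /ll /MM; lia.
rewrite /excess_edge Hadj /= mult_nat //.
set P := fun q : nat * nat => _.
have Pa : P (dd n j, ll n j) by rewrite /P /= !eqxx.
have Pb : P (ll n j, dd n j) by rewrite /P /= !eqxx orbT.
suff : 4 <= count P (cp 0 (LL n)) by move: (count P _) => c; lia.
case: (ltngtP j n) => Hjn.
- apply: leq_trans (count_blk _ Hjn).
  have -> : cp j (blk n j) = [:: (j, dd n j)] ++ [:: (dd n j, ll n j); (ll n j, dd n j);
     (dd n j, ll n j); (ll n j, dd n j)] ++ [:: (dd n j, j); (j, j.+1)] by [].
  exact: count_ge4.
- apply: leq_trans (@count_mid n _).
  have Ej : j = n.+1 by lia.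
  rewrite Ej in Pa Pb.
  have -> : cp n (mid n) = [:: (n, dd n n); (dd n n, ll n n); (ll n n, dd n n);
     (dd n n, ll n n); (ll n n, dd n n); (dd n n, n); (n, dd n n.+1)] ++
     [:: (dd n n.+1, ll n n.+1); (ll n n.+1, dd n n.+1);
     (dd n n.+1, ll n n.+1); (ll n n.+1, dd n n.+1)] ++ [:: (dd n n.+1, n)] by [].
  exact: count_ge4.
- apply: leq_trans (@count_mid n _).
  rewrite Hjn in Pa Pb.
  have -> : cp n (mid n) = [:: (n, dd n n)] ++ [:: (dd n n, ll n n); (ll n n, dd n n);
     (dd n n, ll n n); (ll n n, dd n n)] ++ [:: (dd n n, n); (n, dd n n.+1);
     (dd n n.+1, ll n n.+1); (ll n n.+1, dd n n.+1);
     (dd n n.+1, ll n n.+1); (ll n n.+1, dd n n.+1); (dd n n.+1, n)] by [].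
  exact: count_ge4.
Qed.

End Fam.


Section Fam2.
Variable n : nat.
Local Notation M := (MM n).
Local Notation W := (Wf n).

Lemma NB a b : 0 < b <= M -> pr n b = a -> adj W (inord a) (inord b).
Proof. by move=> Hb <-; apply: NB_par. Qed.

Lemma NBs a b : 0 < b <= M -> pr n b = a -> adj W (inord b) (inord a).
Proof. by move=> Hb Ha; rewrite adj_sym; apply: NB. Qed.

Lemma deg_sp i : 0 < i <= n -> 3 <= deg W (inord i).
Proof.
move=> Hi.
pose nx := if i < n then i.+1 else dd n n.+1.
have H1 : adj W (inord i) (inord i.-1) by apply: NBs; [rewrite /MM; lia | apply: pr_sp].
have H2 : adj W (inord i) (inord (dd n i)).
  by apply: NB; [rewrite /dd /MM; lia | rewrite pr_d; lia].
have H3 : adj W (inord i) (inord nx).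
  rewrite /nx; case: ifP => Hin.
    by apply: NB; [rewrite /MM; lia | rewrite pr_sp //; lia].
  by apply: NB; [rewrite /dd /MM; lia | rewrite pr_d; lia].
have Hnx : nx <= M by rewrite /nx /dd /MM; case: ifP => _; lia.
have Hnx2 : nx != i.-1 /\ nx != dd n i.
  by rewrite /nx /dd; case: ifP => _; split; lia.
apply: (@deg_ge _ _ _ [:: inord i.-1; inord (dd n i); inord nx]).
  rewrite /= !inE !inord_eq ?(eqxx, andbT) //; try (rewrite /dd /MM; lia).
  by rewrite /nx /dd; case: ifP => ?; lia.
by rewrite /= H1 H2 H3.
Qed.

Lemma deg_root : 2 <= deg W (inord 0).
Proof.
pose nx := if 0 < n then 1 else dd n 1.
have H2 : adj W (inord 0) (inord (dd n 0)).
  by apply: NB; [rewrite /dd /MM; lia | rewrite pr_d; lia].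
have H3 : adj W (inord 0) (inord nx).
  rewrite /nx; case: ifP => Hin.
    by apply: NB; [rewrite /MM; lia | rewrite pr_sp //; lia].
  by apply: NB; [rewrite /dd /MM; lia | rewrite pr_d; lia].
have Hnx : nx <= M by rewrite /nx /dd /MM; case: ifP => _; lia.
apply: (@deg_ge _ _ _ [:: inord (dd n 0); inord nx]).
  rewrite /= !inE !inord_eq ?andbT //; try (rewrite /dd /MM; lia).
  by rewrite /nx /dd; case: ifP => ?; lia.
by rewrite /= H2 H3.
Qed.

Lemma deg_d j : j <= n.+1 -> 2 <= deg W (inord (dd n j)).
Proof.
move=> Hj.
have H1 : adj W (inord (dd n j)) (inord (minn j n)).
  by apply: NBs; [rewrite /dd /MM; lia | rewrite pr_d].
have H2 : adj W (inord (dd n j)) (inord (ll n j)).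
  by apply: NB; [rewrite /ll /MM; lia | rewrite pr_l].
apply: (@deg_ge _ _ _ [:: inord (minn j n); inord (ll n j)]).
  rewrite /= !inE !inord_eq ?andbT //; rewrite /ll /MM; lia.
by rewrite /= H1 H2.
Qed.

Lemma is_rootW x : is_root W x = (x == inord 0).
Proof. by rewrite /is_root /Wf /= eq_sym; apply/eqP/eqP => [[->]|->]. Qed.

Lemma ord_repr (x : 'I_M.+1) : exists2 a, a <= M & x = inord a.
Proof. by exists (val x); [rewrite -ltnS; apply: ltn_ord | rewrite inord_val]. Qed.

Lemma classify' a : a <= M -> a = 0 \/
  (0 < a <= n) \/ (exists j, j <= n.+1 /\ (a = dd n j \/ a = ll n j)).
Proof.
move=> Ha; case: (posnP a) => [->|Hp]; first by left.
have Ha2 : 0 < a <= M by rewrite Hp Ha.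
by right; move: (@classify n a Ha2); rewrite Hp.
Qed.

Lemma kernel_Wf : kernel_walk W.
Proof.
have [Ht _] := Wf_tree n.
have Hexc : forall j, j <= n.+1 -> ~~ simple_edge W (inord (ll n j)) (inord (dd n j)).
  by move=> j Hj; rewrite simple_sym; apply: excess_not_simple; apply: excess_dl.
have Hadl : forall j, j <= n.+1 -> adj W (inord (ll n j)) (inord (dd n j)).
  by move=> j Hj; apply: NBs; [rewrite /ll /MM; lia | apply: pr_l].
have Hadd : forall j, j <= n.+1 -> adj W (inord (dd n j)) (inord (ll n j)).
  by move=> j Hj; rewrite adj_sym; apply: Hadl.
split => //.
- move=> x y; have [a Ha ->] := ord_repr x; rewrite is_rootW inord_eq // => Hnr Hd Hxy.
  case: (classify' Ha) => [E|[Hs|[j [Hj [E|E]]]]].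
  + by move: Hnr; rewrite E.
  + by have := deg_sp Hs; rewrite Hd.
  + by subst a; have := deg_d Hj; rewrite Hd.
  + subst a; rewrite (deg1_uniq Hd Hxy (Hadl j Hj)); exact: Hexc.
- move=> x y; have [a Ha ->] := ord_repr x; rewrite is_rootW inord_eq // => /eqP -> Hd.
  by have := deg_root; rewrite Hd.
- move=> x; have [a Ha ->] := ord_repr x; rewrite is_rootW inord_eq // => Hnr Hd H.
  case: (classify' Ha) => [E|[Hs|[j [Hj [E|E]]]]].
  + by move: Hnr; rewrite E.
  + by have := deg_sp Hs; rewrite Hd.
  + subst a; have := H _ (Hadd j Hj); rewrite simple_sym; apply/negP; exact: Hexc.
  + subst a; have := H _ (Hadl j Hj); apply/negP; exact: Hexc.
Qed.

End Fam2.

Lemma fam_tight n : exists m (W : seq 'I_m),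
  [/\ kernel_walk W, excess W = n.+2, m = (3 * n.+2 - 1)%N,
      nsimple W = (2 * n.+2 - 2)%N & size W = (8 * n.+2 - 4)%N].
Proof.
exists (MM n).+1, (Wf n).
have Hk := kernel_Wf n.
have [Ht HE] := Wf_tree n.
have Hs := size_walk Ht.
rewrite size_Wf HE in Hs.
have [H1 H2 H3] := kernel_bound Hk.
rewrite HE in H2.
rewrite size_Wf.
move: Hs H1 H2 H3; move: (excess _) (nsimple _) (\sum_(p in _) _) => e s X Hs H1 H2 H3.
split => //; rewrite /MM in Hs H1 H2 *; lia.
Qed.


Definition W1 : seq 'I_2 := [:: ord0; ord_max; ord0; ord_max].

Lemma I2_cases (v : 'I_2) : v = ord0 \/ v = ord_max.
Proof. by case: v => [[|[|k]] Hk]; [left; apply: val_inj | right; apply: val_inj | ]. Qed.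

Lemma W1_adj01 : adj W1 ord0 ord_max.
Proof. by []. Qed.

Lemma W1_exc : excess_edge W1 ord0 ord_max.
Proof. by []. Qed.

Lemma W1_tree : tree_walk W1 /\ #|edges W1| = 1.
Proof.
have := @build 2 ord0 [:: ord_max; ord0; ord_max] (fun _ => ord0).
apply.
  by move=> v; case: (I2_cases v) => -> //.
by [].
Qed.

Lemma W1_kernel : kernel_walk W1.
Proof.
have [Ht _] := W1_tree.
have [Hall [Hirr _]] := Ht.
have Hnb : forall x y, adj W1 x y -> [/\ x != y & excess_edge W1 x y].
  move=> x y Hxy; have Hne : x != y by apply/eqP => E; move: (Hirr x); rewrite {2}E Hxy.
  split => //; move: Hne Hxy.
  by case: (I2_cases x) => ->; case: (I2_cases y) => ->.
split => //.
- by move=> x y _ _ /Hnb [_ H]; apply/negP => /andP[_ /eqP E]; move: H; rewrite /excess_edge E andbF.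
- by move=> x y _ _ /Hnb [].
- move=> x Hx _ H; case: (I2_cases x) Hx H => -> // _ H.
  have Ha : adj W1 ord_max ord0 by [].
  by move: (H ord0 Ha).
Qed.

Lemma one_tight : exists m (W : seq 'I_m),
  [/\ kernel_walk W, excess W = 1, m = (3 * 1 - 1)%N,
      nsimple W = (2 * 1 - 2)%N & size W = (8 * 1 - 4)%N].
Proof.
exists 2, W1.
have Hk := W1_kernel.
have [Ht HE] := W1_tree.
have Hs := size_walk Ht.
rewrite HE in Hs; change (size W1) with 4 in Hs.
have [H1 H2 H3] := kernel_bound Hk.
rewrite HE in H2.
move: Hs H1 H2 H3; move: (excess _) (nsimple _) (\sum_(p in _) _) => e s X Hs H1 H2 H3.
split => //; lia.
Qed.
Import GRing.Theory Num.Theory.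

Lemma exists_tight xi : (1 <= xi)%N -> exists m (W : seq 'I_m),
  [/\ kernel_walk W, excess W = xi, m = (3 * xi - 1)%N, nsimple W = (2 * xi - 2)%N
    & size W = (8 * xi - 4)%N].
Proof.
case: xi => [//|[|n]] _; first exact: one_tight.
exact: fam_tight.
Qed.

Lemma bound_all xi m (W : seq 'I_m) : kernel_walk W -> excess W = xi ->
  [/\ (m <= 3 * xi - 1)%N, (nsimple W <= 2 * xi - 2)%N,
      size W = (2 * (#|edges W| + xi))%N & (#|edges W| <= 3 * xi - 2)%N].
Proof.
move=> Hk Hx; have [H1 H2 H3] := kernel_bound Hk.
have Hc := edges_card (let: And4 Ht _ _ _ := Hk in Ht).
have Hs := size_walk (let: And4 Ht _ _ _ := Hk in Ht).
rewrite Hx in H3 Hs; split => //; lia.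
Qed.

Lemma Kcoef_tight xi : (1 <= xi)%N ->
  Kcoef xi (2 * xi - 2) (3 * xi - 1)%:Z (4 * xi - 2) != 0%R.
Proof.
move=> Hxi; have [m [W [Hk Hx Hm Hs Hsz]]] := exists_tight Hxi.
rewrite /Kcoef; have -> : (Posz (3 * xi - 1) == (Posz (4 * xi - 2) - Posz xi + 1)%R) = true.
  by apply/eqP; lia.
rewrite mulf_neq0 // ?invr_eq0 pnatr_eq0 -?lt0n ?fact_gt0 //.
rewrite /kcount.
have Hlt : (m < (2 * (4 * xi - 2)).+1)%N by lia.
pose i := Ordinal Hlt.
have HszW : size W == (2 * (4 * xi - 2))%N by apply/eqP; lia.
pose t : (2 * (4 * xi - 2)).-tuple 'I_m := Tuple HszW.
apply: (leq_trans _ (@sum_ge_term _ predT _ i isT)) => /=.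
apply/card_gt0P; exists t; rewrite inE; apply/asboolP => /=.
by split => //; split.
Qed.

Theorem lemma2 (xi : nat) (hxi : (1 <= xi)%N) :
  [/\ (forall (m : nat) (W : seq 'I_m), kernel_walk W -> excess W = xi ->
         (m <= 3 * xi - 1)%N /\ (nsimple W <= 2 * xi - 2)%N),
      (exists (m : nat) (W : seq 'I_m),
         [/\ kernel_walk W, excess W = xi & m = (3 * xi - 1)%N]),
      (exists (m : nat) (W : seq 'I_m),
         [/\ kernel_walk W, excess W = xi & nsimple W = (2 * xi - 2)%N])
    & poly_degrees (Kcoef xi) (2 * xi - 2) (3 * xi - 1)%:Z (4 * xi - 2)].
Proof.
split.
- by move=> m W Hk Hx; have [] := bound_all Hk Hx.
- by have [m [W [Hk Hx Hm _ _]]] := exists_tight hxi; exists m, W.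
- by have [m [W [Hk Hx _ Hn _]]] := exists_tight hxi; exists m, W.
split; last first.
- by exists (2 * xi - 2)%N, (Posz (3 * xi - 1)); apply: Kcoef_tight.
- by exists (2 * xi - 2)%N, (4 * xi - 2)%N; apply: Kcoef_tight.
- by exists (Posz (3 * xi - 1)), (4 * xi - 2)%N; apply: Kcoef_tight.
move=> s a l; rewrite /Kcoef; case: ifP => [/eqP Ha|_]; last by rewrite eqxx.
have [Hk0|Hk0] := eqVneq (kcount xi s l) 0%N.
  by rewrite Hk0 mul0r eqxx.
move=> _; move: Hk0; rewrite /kcount sum_nat_eq0 => /forallPn [i].
rewrite /= -lt0n => /card_gt0P [t]; rewrite inE => /asboolP [Hk [Hx Hn]].
have [H1 H2 H3 H4] := bound_all Hk Hx.
rewrite size_tuple in H3.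
rewrite Ha; split; lia.
Qed.
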